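(* Let $n\ge2$. Then \begin{align*} \zeta_{O_{2n}}(u)^{-1}=&(1-u^2)^{2n^2-4n}\bigl((2n-3)^2u^4+(4n-6)u^3+(4n-6)u^2+2u+1\bigr)^{n-1}\\ &\cdot\bigl((2n-3)u^2+1\bigr)\bigl((2n-3)u^2+(2-2n)u+1\bigr). \end{align*}
   Context: For $n\ge2$, the cocktail party graph $O_{2n}$ is the simple graph on $2n$ vertices that is the complement of a perfect matching (equivalently the complete multipartite graph $K_{2,2,\dots,2}$ with $n$ parts of size $2$). For a finite connected graph $G$ with vertex set $V$, edge set $E$ and no vertex of degree $1$, let $r=|E|-|V|+1$, $\mathcal{A}$ the adjacency matrix, $\mathcal{Q}=D-I$ with $D$ the diagonal degree matrix; the reciprocal Ihara zeta function is $\zeta_G(u)^{-1}=(1-u^2)^{r-1}\det(I-\mathcal{A}u+\mathcal{Q}u^2)$. *)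

(* Defs.v *)
From HB Require Import structures.
From mathcomp Require Import all_boot all_order all_algebra.
Set Implicit Arguments. Unset Strict Implicit. Unset Printing Implicit Defensive.
Import Order.TTheory GRing.Theory Num.Theory.
Local Open Scope ring_scope.

(* A finite simple graph on the vertex set 'I_m is a symmetric irreflexive
   relation e : rel 'I_m. *)

Definition nedges (m : nat) (e : rel 'I_m) : nat :=
  #|[set p : 'I_m * 'I_m | e p.1 p.2 && (p.1 < p.2)%N]|.

Definition vdeg (m : nat) (e : rel 'I_m) (i : 'I_m) : nat := #|[set j | e i j]|.

Definition adjmx (m : nat) (e : rel 'I_m) : 'M[{poly int}]_m :=
  \matrix_(i, j) (e i j)%:R.

Definition Qmx (m : nat) (e : rel 'I_m) : 'M[{poly int}]_m :=
  \matrix_(i, j) ((i == j)%:R * ((vdeg e i)%:R - 1)).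

(* reciprocal Ihara zeta function, as a polynomial in u = 'X:
   (1 - u^2)^(r-1) det(I - A u + Q u^2), with r - 1 = |E| - |V|
   (nonnegative for connected graphs with no vertex of degree <= 1). *)
Definition ihara_recip (m : nat) (e : rel 'I_m) : {poly int} :=
  (1 - 'X ^+ 2) ^+ (nedges e - m)
  * \det (1%:M - 'X *: adjmx e + ('X ^+ 2) *: Qmx e).

(* cocktail party graph O_{2n} on vertices 0..2n-1: complement of the perfect
   matching {2k, 2k+1}. *)
Definition cocktail (n : nat) : rel 'I_(2 * n) :=
  fun i j => (i != j) && ((i : nat)./2 != (j : nat)./2).

(* Main.v *)
Require Import Defs.
From mathcomp Require Import all_boot all_order all_algebra.
From mathcomp Require Import ring zify.
Import GRing.Theory.
Local Open Scope ring_scope.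
Lemma det2x2 (R : comNzRingType) (A : 'M[R]_2) :
  \det A = A 0 0 * A 1 1 - A 0 1 * A 1 0.
Proof.
rewrite (expand_det_row _ 0) !big_ord_recr big_ord0 /= /cofactor !det_mx11 !mxE /=.
rewrite add0r expr0 expr1 !mul1r mulN1r mulrN.
congr (_ * _ - _ * _); congr (A _ _); apply/val_inj => //.
Qed.

Lemma sum_delta (R : nzRingType) m (F : nat -> R) k :
  \sum_(l < m) ((l : nat) == k)%:R * F l = if (k < m)%N then F k else 0.
Proof.
elim: m => [|m IH]; first by rewrite big_ord0.
rewrite big_ord_recr /= IH.
case: (ltngtP k m) => [h|h|->]; rewrite ?eqxx ?mul1r ?mul0r ?addr0 ?add0r.
- by rewrite ltnS ltnW.
- by rewrite ltnS leqNgt h.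
- by rewrite ltnSn.
Qed.

Lemma natr_and (R : nzRingType) (a b : bool) : ((a && b)%:R : R) = a%:R * b%:R.
Proof. by case: a; case: b; rewrite ?mul1r ?mul0r. Qed.

Definition LL (R : comNzRingType) K : 'M[R]_(2+K) :=
  \matrix_(i,j) (((i:nat) == j)%:R - (((i:nat) < 2)%N && ((j:nat) == (i + 2)%N))%:R).
Definition RR (R : comNzRingType) K : 'M[R]_(2+K) :=
  \matrix_(i,j) (((i:nat) == j)%:R + (((2 <= (j:nat))%N && ((j:nat) < 4)%N) && ((i:nat) == (j - 2)%N))%:R).

Lemma mulL (R : comNzRingType) K (g : nat -> nat -> R) : (2 <= K)%N ->
  LL R K *m (\matrix_(i,j) g (i:nat) (j:nat) : 'M_(2+K)) =
  \matrix_(i,j) (g i j - ((i:nat) < 2)%N%:R * g (i + 2)%N j).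
Proof.
move=> hK; apply/matrixP => i j; rewrite !mxE.
rewrite (eq_bigr (fun l : 'I_(2+K) => ((l:nat) == (i:nat))%:R * g l j
   - ((i:nat) < 2)%N%:R * (((l:nat) == i + 2)%N%:R * g l j))); last first.
  by move=> l _; rewrite !mxE natr_and mulrBl mulrA (eq_sym (i:nat)).
rewrite sumrB -mulr_sumr !(sum_delta _ _ (fun l => g l j)) ltn_ord.
case: (ltnP i 2) => hi; last by rewrite !mul0r subr0.
by rewrite ifT //; lia.
Qed.

Lemma mulR (R : comNzRingType) K (g : nat -> nat -> R) :
  (\matrix_(i,j) g (i:nat) (j:nat) : 'M_(2+K)) *m RR R K =
  \matrix_(i,j) (g i j + ((2 <= (j:nat))%N && ((j:nat) < 4)%N)%:R * g i (j - 2)%N).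
Proof.
apply/matrixP => i j; rewrite !mxE.
rewrite (eq_bigr (fun l : 'I_(2+K) => ((l:nat) == j)%:R * g i l
   + ((2 <= (j:nat))%N && ((j:nat) < 4)%N)%:R * (((l:nat) == j - 2)%N%:R * g i l))); last first.
  by move=> l _; rewrite !mxE natr_and mulrDr mulrC; congr (_ + _); rewrite mulrC -mulrA mulrC.
rewrite big_split -mulr_sumr !(sum_delta _ _ (fun l => g i l)) ltn_ord.
have -> : ((j:nat) - 2 < 2 + K)%N by move: (ltn_ord j); lia.
by [].
Qed.

Lemma detLL (R : comNzRingType) K : \det (LL R K) = 1.
Proof.
rewrite -det_tr det_trig; last first.
  apply/is_trig_mxP => i j hij; rewrite !mxE.
  rewrite (gtn_eqF hij) /=.
  have -> : ((i:nat) == (j + 2)%N) = false by apply/negbTE; lia.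
  by rewrite andbF subrr.
rewrite big1 // => i _; rewrite !mxE eqxx.
have -> : ((i:nat) == (i + 2)%N) = false by apply/negbTE; lia.
by rewrite andbF subr0.
Qed.

Lemma detRR (R : comNzRingType) K : \det (RR R K) = 1.
Proof.
rewrite -det_tr det_trig; last first.
  apply/is_trig_mxP => i j hij; rewrite !mxE.
  rewrite (gtn_eqF hij) /=.
  have -> : ((j:nat) == (i - 2)%N) = false by apply/negbTE; lia.
  by rewrite andbF addr0.
rewrite big1 // => i _; rewrite !mxE eqxx.
have -> : ((2 <= (i:nat))%N && ((i:nat) < 4)%N && ((i:nat) == (i - 2)%N)) = false.
  by case: (leqP 2 i) => h //=; rewrite andbC; apply/negbTE; lia.
by rewrite addr0.
Qed.

Definition Nf {R : comNzRingType} (a b : R) (w : nat -> R) (i j : nat) : R :=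
  (i == j)%:R * a + ((i != j) && (i./2 == j./2))%:R * b + w j.

Definition Hf {R : comNzRingType} (a b : R) (w : nat -> R) (i j : nat) : R :=
  Nf a b w i j - (i < 2)%N%:R * Nf a b w (i + 2)%N j.

Definition Ef {R : comNzRingType} (a b : R) (w : nat -> R) (i j : nat) : R :=
  Hf a b w i j + ((2 <= j)%N && (j < 4)%N)%:R * Hf a b w i (j - 2)%N.

Lemma EfUR (R : comNzRingType) (a b : R) w i j : (i < 2)%N -> (2 <= j)%N -> Ef a b w i j = 0.
Proof.
move=> hi hj.
case: i hi => [|[|//]] _; case: j hj => [|[|[|[|j]]]] // _;
  rewrite /Ef /Hf /Nf /= ?subn2 /=; try ring.
all: idtac.
Qed.

Lemma EfUL (R : comNzRingType) (a b : R) w i j : (i < 2)%N -> (j < 2)%N ->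
  Ef a b w i j = (i == j)%:R * a + (i != j)%:R * b.
Proof.
move=> hi hj.
case: i hi => [|[|//]] _; case: j hj => [|[|//]] _; rewrite /Ef /Hf /Nf /=; ring.
Qed.

Lemma EfDR (R : comNzRingType) (a b : R) w i j :
  Ef a b w i.+2 j.+2 = Nf a b (fun j => w j.+2 + (j < 2)%N%:R * w j) i j.
Proof.
rewrite /Ef /Hf /Nf /=.
case: j => [|[|j]] /=; rewrite ?subn2 /= !eqSS; ring.
Qed.

Lemma detN (R : comNzRingType) m : forall (a b : R) (w : nat -> R),
  \det (\matrix_(i < m.+1.*2, j < m.+1.*2) Nf a b w i j) =
  (a + b) ^+ m * (a - b) ^+ m.+1 * (a + b + \sum_(i < m.+1.*2) w i).
Proof.
elim: m => [|m IH] a b w.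
  rewrite det2x2 !mxE /= !big_ord_recr big_ord0 /= /Nf /=; ring.
pose K := m.+1.*2.
have -> : \det (\matrix_(i < m.+2.*2, j < m.+2.*2) Nf a b w i j) =
          \det (\matrix_(i < 2 + K, j < 2 + K) Nf a b w i j) by [].
rewrite -[LHS]mul1r -(detLL R K) -[LHS]mulr1 -(detRR R K) -!det_mulmx.
rewrite (mulL _ _ (Nf a b w)); last by rewrite /K; lia.
rewrite (mulR _ _ (Hf a b w)).
set M := (\matrix_(i, j) _ : 'M_(2+K)).
rewrite -(submxK M).
have -> : ursubmx M = 0.
  apply/matrixP => i j; rewrite !mxE /=; apply: EfUR => //; lia.
rewrite det_lblock det2x2.
have -> : drsubmx M = \matrix_(i, j) Nf a b (fun j => w j.+2 + (j < 2)%N%:R * w j) i j.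
  apply/matrixP => i j; rewrite !mxE /= !add2n; exact: EfDR.
rewrite IH !mxE /=.
have -> : (1 %% 2 = 1)%N by [].
rewrite big_split /=.
have -> : \sum_(i < m.+1.*2) (i < 2)%N%:R * w i = w 0%N + w 1%N.
  rewrite (_ : m.+1.*2 = (m.*2).+2)%N // !big_ord_recl /= big1 ?addr0 ?mul1r //.
  by move=> i _; rewrite mul0r.
rewrite [in RHS](_ : m.+2.*2 = (m.+1.*2).+2)%N // !big_ord_recl /=.
rewrite /Hf /Nf /= !exprS; ring.
Qed.

Lemma cnt n c : (\sum_(0 <= j < n.*2) (j./2 != c))%N = (n.*2 - 2 * (c < n))%N.
Proof.
elim: n => [|n IH]; first by rewrite big_geq.
rewrite (_ : n.+1.*2 = (n.*2).+2)%N // !big_nat_recr //= IH.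
rewrite uphalf_double doubleK.
case: (ltngtP c n) => h; rewrite ?(ltn_eqF h) ?(gtn_eqF h) /=.
- have -> : (c < n.+1)%N by lia.
  lia.
- have -> : (c < n.+1)%N = false by lia.
  lia.
- subst c; rewrite ltnSn; lia.
Qed.

Lemma dsum s : (\sum_(0 <= i < s) \sum_(0 <= j < s) ((i < j) && (i./2 != j./2)))%N
   = (\sum_(0 <= t < s) \sum_(0 <= i < t) (i./2 != t./2))%N.
Proof.
elim: s => [|s IH]; first by rewrite !big_geq.
rewrite big_nat_recr //= [in RHS]big_nat_recr //= -IH.
rewrite (@big1_seq _ _ _ _ (index_iota 0 s.+1)); last first.
  by move=> j /andP[_]; rewrite mem_index_iota => /andP[_ hj]; rewrite ltnNge -ltnS hj.
rewrite addn0.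
rewrite (eq_big_nat _ _ (F2 := fun i => (\sum_(0 <= j < s) ((i < j) && (i./2 != j./2)) + (i./2 != s./2))%N)); last first.
  by move=> i /andP[_ hi]; rewrite big_nat_recr //= hi.
by rewrite big_split.
Qed.

Lemma tsum n : (\sum_(0 <= t < n.*2) \sum_(0 <= i < t) (i./2 != t./2))%N = (2 * n ^ 2 - 2 * n)%N.
Proof.
elim: n => [|n IH]; first by rewrite big_geq.
rewrite (_ : n.+1.*2 = (n.*2).+2)%N // !big_nat_recr //= IH.
rewrite uphalf_double doubleK cnt ltnn eqxx /=.
rewrite !muln0 !subn0 !addn0.
have -> : (n ^ 2 = n * n)%N by rewrite expnS expn1.
have -> : (n.+1 ^ 2 = n.+1 * n.+1)%N by rewrite expnS expn1.
nia.
Qed.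


Lemma cnt2 n c : (\sum_(0 <= j < 2 * n) (j./2 != c))%N = (2 * n - 2 * (c < n))%N.
Proof. by rewrite mul2n cnt. Qed.


Lemma card_nat (T : finType) (P : pred T) : #|[set x | P x]| = (\sum_x P x)%N.
Proof. by rewrite -sum1dep_card big_mkcond; apply: eq_bigr => x _; case: (P x). Qed.

Lemma cock_eq n (i j : 'I_(2 * n)) : @cocktail n i j = ((i:nat)./2 != (j:nat)./2).
Proof.
rewrite /cocktail; case: (eqVneq i j) => [->|//]; by rewrite eqxx.
Qed.

Lemma vdeg_cocktail n (i : 'I_(2*n)) : vdeg (@cocktail n) i = (2*n - 2)%N.
Proof.
rewrite /vdeg card_nat.
under eq_bigr do rewrite cock_eq.
rewrite -(big_mkord xpredT (fun j => nat_of_bool ((i:nat)./2 != j./2))).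
rewrite (eq_bigr (fun j => nat_of_bool (j./2 != (i:nat)./2))); last by move=> j _; rewrite eq_sym.
rewrite cnt2.
have -> : ((i:nat)./2 < n)%N.
  by rewrite ltn_half_double -mul2n.
by [].
Qed.

Lemma nedges_cocktail n : nedges (@cocktail n) = (2 * n ^ 2 - 2 * n)%N.
Proof.
rewrite /nedges card_nat.
rewrite (eq_bigl (fun p : 'I_(2*n) * 'I_(2*n) => xpredT p.1 && xpredT p.2)) //.
rewrite -(pair_big xpredT xpredT (fun i j : 'I_(2*n) => nat_of_bool (@cocktail n i j && (i < j)%N))) /=.
rewrite (eq_bigr (fun i : 'I_(2*n) => \sum_(0 <= j < 2 * n) ((i < j)%N && ((i:nat)./2 != j./2)))%N); last first.
  move=> i _; rewrite [RHS]big_mkord.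
  apply: eq_bigr => j _; by rewrite cock_eq andbC.
rewrite -(big_mkord xpredT (fun i => \sum_(0 <= j < 2 * n) nat_of_bool ((i < j)%N && (i./2 != j./2)))%N).
rewrite dsum; have := tsum n; rewrite -mul2n => ->; done.
Qed.

Lemma polyCz (z : int) : (z%:P : {poly int}) = z%:~R.
Proof. by rewrite -{1}[z]intz rmorph_int. Qed.

Lemma detN2 (R : comNzRingType) m s (E : s = m.+1.*2) (a b : R) w (M : 'M[R]_s) :
  (forall i j : 'I_s, M i j = Nf a b w i j) ->
  \det M = (a + b) ^+ m * (a - b) ^+ m.+1 * (a + b + \sum_(i < s) w i).
Proof.
move=> HM; subst s; rewrite -detN; congr (\det _); apply/matrixP => i j; by rewrite mxE HM.
Qed.

Theorem mainTheorem12 (n : nat) (hn : (2 <= n)%N) :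
  @ihara_recip (2 * n)%N (@cocktail n) =
  (1 - 'X ^+ 2) ^+ (2 * n ^ 2 - 4 * n)
  * ((((2 * n%:Z - 3) ^+ 2)%:P * 'X ^+ 4 + (4 * n%:Z - 6)%:P * 'X ^+ 3
      + (4 * n%:Z - 6)%:P * 'X ^+ 2 + 2%:P * 'X + 1) ^+ (n - 1))
  * ((2 * n%:Z - 3)%:P * 'X ^+ 2 + 1)
  * ((2 * n%:Z - 3)%:P * 'X ^+ 2 + (2 - 2 * n%:Z)%:P * 'X + 1).
Proof.
case: n hn => [|m] // hm.
rewrite /ihara_recip nedges_cocktail.
have hE : (2 * m.+1 = m.+1.*2)%N by rewrite mul2n.
rewrite (@detN2 _ m _ hE (1 + 'X + 'X ^+ 2 * ((2 * m)%N%:R - 1)) 'X (fun _ => - 'X)); last first.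
  move=> i j; rewrite !mxE vdeg_cocktail.
  have -> : (2 * m.+1 - 2 = 2 * m)%N by lia.
  rewrite /Nf; case: (eqVneq i j) => [<-|hij].
    by rewrite /cocktail !eqxx /=; ring.
  have hn : ((i:nat) == j) = false by apply/negbTE.
  rewrite /cocktail hij hn /=.
  by case: ((i:nat)./2 == (j:nat)./2) => /=; ring.
have -> : (2 * m.+1 ^ 2 - 2 * m.+1 - 2 * m.+1 = 2 * m.+1 ^ 2 - 4 * m.+1)%N.
  by rewrite -subnDA; congr (_ - _)%N; lia.
have -> : (m.+1 - 1 = m)%N by lia.
rewrite sumr_const card_ord !polyCz.
set A := (1 + 'X + 'X^2 * ((2 * m)%:R - 1) + 'X : {poly int}).
set B := (1 + 'X + 'X^2 * ((2 * m)%:R - 1) - 'X : {poly int}).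
have -> : (((2 * m.+1%:Z - 3) ^+ 2)%:~R * 'X^4 + (4 * m.+1%:Z - 6)%:~R * 'X^3 +
   (4 * m.+1%:Z - 6)%:~R * 'X^2 + 2%:~R * 'X + 1 : {poly int}) = A * B.
  rewrite /A /B; ring.
rewrite exprMn [B ^+ m.+1]exprS.
move: (A ^+ m) (B ^+ m) ((1 - 'X^2) ^+ (2 * m.+1 ^ 2 - 4 * m.+1)) => pa pb T.
rewrite /A /B; ring.
Qed.
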